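(* Let $\mu,\beta,\gamma$ be positive reals with $\gamma+\beta+\sqrt{\mu}<\frac{1}{2000}$. Let $G$ be a bipartite graph with bipartition $A\cup B$, $|A|=|B|=m$, minimum degree at least $\frac{m}{10}$ and at least $(1-\beta)m^2$ edges; let $\mathcal{F}$ be a $\mu m$-bounded incompatibility system over $G$; and let $e_i=\{a_i,b_i\}$ ($i=1,\dots,m$, $a_i\in A$, $b_i\in B$) be a perfect matching of $G$, with $f$ the bijection $f(a_i)=b_i$, $f(b_i)=a_i$. Suppose $P=(v_0,v_1,\dots,v_\ell)$ is a proper smooth path in $G$ such that there is no vertex $x\notin V(P)$ for which $(f(x),x,v_0,\dots,v_\ell)$ is a proper smooth path. Then there exists a set $Z\subseteq N(v_0)\cap V(P)$ with $|Z|\ge d(v_0)-(25\sqrt{\mu}+2\gamma)m$ such that for every $v_i\in Z$ the path $(v_{i-1},\dots,v_1,v_0,v_i,v_{i+1},\dots,v_\ell)$ is a proper smooth path.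
   Context: All graphs are finite and simple; $N(v)$, $d(v)$ are neighborhood and degree; $|P|$ is the number of vertices of $P$; $\gamma m$ is treated as an integer. An incompatibility system $\mathcal{F}$ over $G=(V,E)$ is a family $\{F_v\}_{v\in V}$ where each $F_v$ is a set of unordered pairs $\{e,e'\}$ of distinct edges with $e\cap e'=\{v\}$; edges are incompatible if the pair lies in some $F_v$, compatible otherwise. A path or cycle is compatible with $\mathcal{F}$ if every pair of its edges is compatible. $\mathcal{F}$ is $\Delta$-bounded if for every vertex $v$ and edge $e\ni v$, at most $\Delta$ other edges $e'\ni v$ satisfy $\{e,e'\}\in F_v$. For a path $P=(v_0,\dots,v_\ell)$ and a vertex $w$, a vertex $v_i\in V(P)$ adjacent to $w$ is a bad neighbor of $w$ in $P$ if $\{w,v_i\}$ is incompatible with $\{v_i,v_{i-1}\}$ or with $\{v_i,v_{i+1}\}$ (for those of these that are edges of $P$); $w$ is $\delta$-good for $P$ if it has fewer than $\delta|P|$ bad neighbors in $P$. A path or cycle $H$ of $G$ is proper if it contains all edges $e_1,\dots,e_{\gamma m}$ and $f(V(H)\cap A)=V(H)\cap B$. Let $X_A$ be the set of $x\in A$ for which there are at least $\sqrt{\mu}m$ indices $i$ such that $\{a_i,b_i\}$ and $\{x,b_i\}$ are incompatible edges, and $X_B$ the set of $y\in B$ for which there are at least $\sqrt{\mu}m$ indices $i$ such that $\{a_i,b_i\}$ and $\{a_i,y\}$ are incompatible edges. A proper path $P=(v_0,\dots,v_\ell)$ with $v_0\in A$, $v_\ell\in B$ is smooth if (i) $P$ is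 compatible with $\mathcal{F}$, (ii) $v_0$ and $v_\ell$ are $8\sqrt{\mu}$-good for $P$, and (iii) $v_0\notin X_A$ and $v_\ell\notin X_B$. (A ''proper smooth path'' is in particular required to have its first vertex in $A$ and last vertex in $B$.) *)

(* Defs.v *)
From mathcomp Require Import all_boot all_order all_algebra.
From mathcomp Require Import reals.
Set Implicit Arguments. Unset Strict Implicit. Unset Printing Implicit Defensive.
Import Order.TTheory GRing.Theory Num.Theory.

Section IncompatPaths.
Variable T : finType.
Variable adj : rel T.
(* incompatibility system: [inc v x y] encodes {{v,x},{v,y}} \in F_v *)
Variable inc : T -> T -> T -> bool.

Definition simple_graph := symmetric adj /\ irreflexive adj.

Definition incompat_system :=
  forall v x y, inc v x y -> [&& adj v x, adj v y, x != y & inc v y x].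

Definition bounded_inc (R : realType) (Delta : R) :=
  forall v x, adj v x -> (#|[set y | inc v x y]|%:R <= Delta)%R.

Definition nbhd (v : T) : {set T} := [set y | adj v y].
Definition deg (v : T) : nat := #|nbhd v|.

Definition is_gpath (P : seq T) : bool :=
  if P is x :: s then path adj x s && uniq P else false.

Definition pedges (P : seq T) : seq (T * T) := zip P (behead P).

Definition incomp_edges (p q : T * T) : bool :=
  let: (u1, w1) := p in let: (u2, w2) := q in
  [|| (u1 == u2) && inc u1 w1 w2, (u1 == w2) && inc u1 w1 u2,
      (w1 == u2) && inc w1 u1 w2 | (w1 == w2) && inc w1 u1 u2].

Definition compatible_path (P : seq T) : bool :=
  all (fun p => all (fun q => ~~ incomp_edges p q) (pedges P)) (pedges P).

Definition path_has_edge (P : seq T) (x y : T) : bool :=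
  ((x, y) \in pedges P) || ((y, x) \in pedges P).

Definition bad_nb (P : seq T) (w v : T) : bool :=
  let i := index v P in
  [&& v \in P, adj w v &
   ((0 < i)%N && inc v w (nth v P i.-1)) || ((i.+1 < size P)%N && inc v w (nth v P i.+1))].

Definition good (R : realType) (delta : R) (P : seq T) (w : T) : bool :=
  (#|[set v | bad_nb P w v]|%:R < delta * (size P)%:R)%R.

Variables (m : nat) (A B : {set T}) (a b : 'I_m -> T).

Definition fmatch (x : T) : T :=
  match [pick i | a i == x] with
  | Some i => b i
  | None => match [pick i | b i == x] with Some i => a i | None => x end
  end.

Definition proper_path (k : nat) (P : seq T) : bool :=
  [forall i : 'I_m, (i < k)%N ==> path_has_edge P (a i) (b i)] &&
  (fmatch @: [set x | (x \in P) && (x \in A)] == [set x | (x \in P) && (x \in B)]).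

Definition X_A (R : realType) (mu : R) : {set T} :=
  [set x in A | (Num.sqrt mu * m%:R <= #|[set i : 'I_m | inc (b i) (a i) x]|%:R)%R].
Definition X_B (R : realType) (mu : R) : {set T} :=
  [set y in B | (Num.sqrt mu * m%:R <= #|[set i : 'I_m | inc (a i) (b i) y]|%:R)%R].

Definition proper_smooth (R : realType) (mu : R) (k : nat) (P : seq T) : bool :=
  if P is v0 :: s then
    let vl := last v0 s in
    [&& is_gpath P, proper_path k P, v0 \in A, vl \in B,
        compatible_path P,
        good (8 * Num.sqrt mu) P v0, good (8 * Num.sqrt mu) P vl,
        v0 \notin X_A mu & vl \notin X_B mu]
  else false.

End IncompatPaths.

(* Main.v *)
Require Import Defs.
From mathcomp Require Import all_boot all_order all_algebra.
From mathcomp Require Import reals.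
From mathcomp Require Import zify.
From mathcomp Require Import ring lra.
Import Order.TTheory GRing.Theory Num.Theory.
Set Implicit Arguments. Unset Strict Implicit. Unset Printing Implicit Defensive.



Section P1.
Variable T : finType.
Variable adj : rel T.
Variable inc : T -> T -> T -> bool.

Notation phe := (@path_has_edge T).

Lemma pedges_cons2 (x y : T) s : pedges (x :: y :: s) = (x, y) :: pedges (y :: s).
Proof. by []. Qed.

Lemma minn_pred1 n j : j < minn n n.-1 -> j.+1 < n. Proof. lia. Qed.
Lemma minn_pred2 n j : j.+1 < n -> j < minn n n.-1. Proof. lia. Qed.

Lemma pedges_nthP (s : seq T) x y :
  reflect (exists2 j, j.+1 < size s & x = nth x s j /\ y = nth x s j.+1)
          ((x, y) \in pedges s).
Proof.
apply: (iffP idP).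
- move=> /(nthP (x, y)) [j Hj].
  rewrite nth_zip_cond Hj /= nth_behead => -[Ex Ey].
  have Hj' : j.+1 < size s by move: Hj; rewrite size_zip size_behead; apply: minn_pred1.
  exists j => //; split.
    by rewrite -Ex; apply: set_nth_default; lia.
  by rewrite -Ey; apply: set_nth_default; lia.
- move=> [j Hj [Ex Ey]]; apply/(nthP (x, y)); exists j.
    by rewrite size_zip size_behead; apply: minn_pred2.
  rewrite nth_zip_cond size_zip size_behead /= nth_behead.
  have -> : j < minn (size s) (size s).-1 by apply: minn_pred2.
  have E2 : nth y s j.+1 = nth x s j.+1 by apply: set_nth_default.
  by congr pair; [exact: esym Ex | rewrite E2 -Ey].
Qed.

Lemma pedges_mem (s : seq T) x y : (x, y) \in pedges s -> (x \in s) && (y \in s).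
Proof.
move=> /pedges_nthP [j Hj [Ex Ey]]; apply/andP; split.
  by rewrite Ex; apply: mem_nth; exact: ltnW Hj.
by rewrite Ey; apply: mem_nth; exact: Hj.
Qed.

Lemma phe_mem (s : seq T) x y : phe s x y -> (x \in s) && (y \in s).
Proof. by rewrite /path_has_edge => /orP [/pedges_mem|/pedges_mem/andP[-> ->]]. Qed.

Lemma pedges_succ (s : seq T) x y : uniq s ->
  ((x, y) \in pedges s) = [&& x \in s, (index x s).+1 < size s & y == nth x s (index x s).+1].
Proof.
move=> us; apply/pedges_nthP/idP.
- move=> [j Hj [Ex Ey]].
  have Hi : index x s = j by rewrite Ex index_uniq //; exact: ltnW Hj.
  rewrite Hi -Ey eqxx andbT Hj Ex mem_nth //; exact: ltnW Hj.
- move=> /and3P [xs Hi /eqP Ey]; exists (index x s) => //; by rewrite nth_index.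
Qed.

Lemma pedges_pred (s : seq T) x y : uniq s ->
  ((y, x) \in pedges s) = [&& x \in s, 0 < index x s & y == nth x s (index x s).-1].
Proof.
move=> us; apply/pedges_nthP/idP.
- move=> [j Hj [Ey Ex']].
  have Ex : x = nth x s j.+1 by rewrite Ex'; apply: set_nth_default.
  have Hi : index x s = j.+1 by rewrite Ex index_uniq.
  have Ey2 : y = nth x s j by rewrite Ey; apply: set_nth_default; exact: ltnW Hj.
  by rewrite Hi /= -Ey2 eqxx andbT Ex mem_nth.
- move=> /and3P [xs Hi /eqP Ey]; exists (index x s).-1.
    by rewrite prednK // index_mem.
  rewrite prednK // nth_index //; split => //.
  rewrite [LHS]Ey; apply: set_nth_default; rewrite -index_mem in xs; exact: leq_ltn_trans (leq_pred _) xs.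
Qed.


Definition e2 (a c p q : T) := ((a == p) && (c == q)) || ((a == q) && (c == p)).

Lemma e2C a c p q : e2 a c p q = e2 a c q p.
Proof. by rewrite /e2 orbC. Qed.

Lemma pedges_cat (x : T) s1 y s2 :
  pedges (x :: s1 ++ y :: s2) = pedges (x :: s1) ++ (last x s1, y) :: pedges (y :: s2).
Proof.
elim: s1 x => [|z s1 IH] x //.
by rewrite cat_cons pedges_cons2 IH pedges_cons2.
Qed.

Lemma phe_cat1 (x : T) s1 y s2 a c :
  phe (x :: s1 ++ y :: s2) a c =
  [|| phe (x :: s1) a c, e2 a c (last x s1) y | phe (y :: s2) a c].
Proof.
rewrite /path_has_edge pedges_cat !mem_cat !in_cons /e2 !xpair_eqE.
by do ![case: (_ \in _)]; do ![case: (_ == _)].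
Qed.

Lemma phe_cat (d : T) s1 s2 a c : s1 != [::] -> s2 != [::] ->
  phe (s1 ++ s2) a c =
  [|| phe s1 a c, e2 a c (last d s1) (head d s2) | phe s2 a c].
Proof. by case: s1 => // x s1; case: s2 => // y s2 _ _; rewrite phe_cat1. Qed.

Lemma phe_nil a c : phe [::] a c = false. Proof. by []. Qed.
Lemma phe_1 (x : T) a c : phe [:: x] a c = false. Proof. by []. Qed.

Lemma last_rev (d : T) s : last d (rev s) = head d s.
Proof. by case: s => // x s; rewrite rev_cons last_rcons. Qed.

Lemma phe_rev (s : seq T) a c : phe (rev s) a c = phe s a c.
Proof.
elim: s => [|z t IH] //.
case: t IH => [|w t] IH; first by [].
rewrite rev_cons -cats1 (phe_cat z) //; last by rewrite rev_cons; case: (rev t).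
rewrite IH last_rev orbF /=.
rewrite -[z :: w :: t]/([:: z] ++ w :: t) (phe_cat z) //=.
by rewrite e2C orbC.
Qed.

Lemma path_pedges (x : T) s :
  path adj x s = all (fun p => adj p.1 p.2) (pedges (x :: s)).
Proof.
elim: s x => [|y s IH] x //.
by rewrite pedges_cons2 /= IH.
Qed.

Lemma gpath_intro (Q : seq T) : Q != [::] -> uniq Q ->
  (forall a c, phe Q a c -> adj a c) -> is_gpath adj Q.
Proof.
case: Q => // q qs _ uQ H; rewrite /is_gpath uQ andbT path_pedges.
apply/allP => [[u w]] Hp; apply: H; by rewrite /path_has_edge Hp.
Qed.

Lemma gpath_elim (Q : seq T) : symmetric adj -> is_gpath adj Q ->
  uniq Q /\ (forall a c, phe Q a c -> adj a c).
Proof.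
move=> sym; case: Q => // q qs /andP [Hp uQ]; split => // a c.
move: Hp; rewrite path_pedges => /allP Hp.
rewrite /path_has_edge => /orP [/Hp //| /Hp /=]; by rewrite sym.
Qed.

Lemma compat_intro (Q : seq T) :
  (forall a c d, phe Q a c -> phe Q a d -> ~~ inc a c d) -> compatible_path inc Q.
Proof.
move=> H; apply/allP => [[u1 w1]] H1; apply/allP => [[u2 w2]] H2.
rewrite /incomp_edges; apply/negP.
have P1 : phe Q u1 w1 by rewrite /path_has_edge H1.
have P1' : phe Q w1 u1 by rewrite /path_has_edge H1 orbT.
have P2 : phe Q u2 w2 by rewrite /path_has_edge H2.
have P2' : phe Q w2 u2 by rewrite /path_has_edge H2 orbT.
case/or4P => /andP [/eqP E h].
- by subst u2; move: (H _ _ _ P1 P2); rewrite h.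
- by subst w2; move: (H _ _ _ P1 P2'); rewrite h.
- by subst u2; move: (H _ _ _ P1' P2); rewrite h.
- by subst w2; move: (H _ _ _ P1' P2'); rewrite h.
Qed.

Lemma compat_elim (Q : seq T) : compatible_path inc Q ->
  forall a c d, phe Q a c -> phe Q a d -> ~~ inc a c d.
Proof.
move=> /allP H a c d Hc Hd; apply/negP => h.
have K : forall p q, p \in pedges Q -> q \in pedges Q -> incomp_edges inc p q -> False.
  by move=> p q Hp Hq; move: (H p Hp) => /allP /(_ q Hq); case: (incomp_edges _ _ _).
move: Hc Hd; rewrite /path_has_edge => /orP [Hc|Hc] /orP [Hd|Hd].
- by apply: (K _ _ Hc Hd); rewrite /incomp_edges eqxx h.
- by apply: (K _ _ Hc Hd); rewrite /incomp_edges eqxx h !orbT.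
- by apply: (K _ _ Hc Hd); rewrite /incomp_edges eqxx h !orbT.
- by apply: (K _ _ Hc Hd); rewrite /incomp_edges eqxx h !orbT.
Qed.

Lemma bad_intro (Q : seq T) w v y : uniq Q -> v \in Q -> adj w v ->
  phe Q v y -> inc v w y -> bad_nb adj inc Q w v.
Proof.
move=> uQ vQ awv; rewrite /path_has_edge pedges_succ // pedges_pred //.
rewrite /bad_nb vQ awv /=.
case/orP => /andP [H /eqP ->] h; first by rewrite H h orbT.
by rewrite H h.
Qed.

Lemma bad_elim (Q : seq T) w v : uniq Q -> bad_nb adj inc Q w v ->
  [/\ v \in Q, adj w v & exists2 y, phe Q v y & inc v w y].
Proof.
move=> uQ /and3P [vQ awv H]; split => //.
case/orP: H => /andP [H h].
  exists (nth v Q (index v Q).-1) => //.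
  by rewrite /path_has_edge; apply/orP; right; rewrite pedges_pred // vQ H eqxx.
exists (nth v Q (index v Q).+1) => //.
by rewrite /path_has_edge pedges_succ // vQ H eqxx /=.
Qed.

End P1.

Section Main.
Variable R : realType.
Variable mu : R.
Variable T : finType.
Variable adj : rel T.
Variable inc : T -> T -> T -> bool.
Variables (A B : {set T}) (m k : nat) (a b : 'I_m -> T).
Hypothesis mu_gt0 : (0 < mu)%R.
Hypothesis Hsym : symmetric adj.
Hypothesis Hirr : irreflexive adj.
Hypothesis Hdis : [disjoint A & B].
Hypothesis Hbip : forall x y, adj x y -> ((x \in A) && (y \in B)) || ((x \in B) && (y \in A)).
Hypothesis Hinc : incompat_system adj inc.
Hypothesis inja : injective a.
Hypothesis injb : injective b.
Hypothesis aA : forall i, a i \in A.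
Hypothesis bB : forall i, b i \in B.
Hypothesis adjab : forall i, adj (a i) (b i).

Notation phe := (@path_has_edge T).
Notation f := (fmatch a b).
Notation PS := (proper_smooth adj inc A B a b mu k).
Notation good8 := (good adj inc (8 * Num.sqrt mu)).
Notation XA := (X_A inc A a b mu).
Notation XB := (X_B inc B a b mu).

Lemma nAB x : x \in A -> x \in B -> False.
Proof. by move=> xA; rewrite (disjointFr Hdis xA). Qed.

Lemma sideA x y : adj x y -> x \in A -> y \in B.
Proof. by move=> /Hbip /orP [/andP [_ ->] // | /andP [xB _] xA]; case: (nAB xA xB). Qed.

Lemma sideB x y : adj x y -> x \in B -> y \in A.
Proof. by move=> /Hbip /orP [/andP [xA _] xB | /andP [_ ->] //]; case: (nAB xA xB). Qed.

Lemma incS v x y : inc v x y -> inc v y x.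
Proof. by move=> /Hinc /and4P []. Qed.

Lemma inc_neq v x : inc v x x = false.
Proof. by apply/negP => /Hinc /and4P [_ _]; rewrite eqxx. Qed.

Lemma fm_a j : f (a j) = b j.
Proof.
rewrite /fmatch; case: pickP => [i /eqP Hi | H]; first by rewrite (inja Hi).
by move: (H j); rewrite eqxx.
Qed.

Lemma fm_b j : f (b j) = a j.
Proof.
rewrite /fmatch; case: pickP => [i /eqP Hi | _].
  by case: (nAB (aA i)); rewrite Hi.
case: pickP => [i /eqP Hi | H]; first by rewrite (injb Hi).
by move: (H j); rewrite eqxx.
Qed.

Lemma B_b x : #|B| = m -> x \in B -> exists j, x = b j.
Proof.
move=> cB xB.
have E : b @: [set: 'I_m] = B.
  apply/eqP; rewrite eqEcard card_imset // cardsT card_ord cB leqnn andbT.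
  by apply/subsetP => y /imsetP [j _ ->].
by move: xB; rewrite -E => /imsetP [j _ ->]; exists j.
Qed.

Lemma e2P (c y p q : T) : e2 c y p q -> (c = p /\ y = q) \/ (c = q /\ y = p).
Proof. by rewrite /e2 => /orP [/andP [/eqP -> /eqP ->]|/andP [/eqP -> /eqP ->]]; [left|right]. Qed.

Lemma e2_refl (p q : T) : e2 p q p q. Proof. by rewrite /e2 !eqxx. Qed.
Lemma e2_rev (p q : T) : e2 q p p q. Proof. by rewrite /e2 !eqxx orbT. Qed.

Lemma good_mono (Q P : seq T) w : 
  (forall v, bad_nb adj inc Q w v -> bad_nb adj inc P w v) -> size P <= size Q ->
  good8 P w -> good8 Q w.
Proof.
move=> Hs Hz; rewrite /good => H; apply: le_lt_trans (lt_le_trans H _).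
  rewrite ler_nat; apply: subset_leq_card; apply/subsetP => v; rewrite !inE; exact: Hs.
apply: ler_wpM2l; last by rewrite ler_nat.
by rewrite mulr_ge0 // sqrtr_ge0.
Qed.

Lemma phe_head (v0 : T) s d : uniq (v0 :: s) -> phe (v0 :: s) v0 d -> d = nth v0 (v0 :: s) 1.
Proof.
move=> u; rewrite /path_has_edge pedges_succ // pedges_pred //= eqxx /=.
by rewrite andbF orbF => /and3P [_ _ /eqP].
Qed.

Lemma ps_intro (Q : seq T) d : Q != [::] -> uniq Q ->
  (forall x y, phe Q x y -> adj x y) -> proper_path A B a b k Q ->
  head d Q \in A -> last d Q \in B -> compatible_path inc Q ->
  good8 Q (head d Q) -> good8 Q (last d Q) ->
  head d Q \notin XA -> last d Q \notin XB -> PS Q.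
Proof.
move=> Qn uQ Hadj pQ h1 h2 cQ g1 g2 x1 x2.
have gQ := gpath_intro Qn uQ Hadj.
case: Q Qn uQ Hadj pQ h1 h2 cQ g1 g2 x1 x2 gQ => // q qs _ _ _ pQ h1 h2 cQ g1 g2 x1 x2 gQ.
by rewrite /proper_smooth gQ pQ h1 h2 cQ g1 g2 x1 x2.
Qed.

Lemma ps_elim (v0 : T) s : PS (v0 :: s) ->
  [/\ uniq (v0 :: s), (forall x y, phe (v0 :: s) x y -> adj x y), proper_path A B a b k (v0 :: s),
      v0 \in A & last v0 s \in B] /\
   [/\ compatible_path inc (v0 :: s), good8 (v0 :: s) v0, good8 (v0 :: s) (last v0 s), v0 \notin XA & last v0 s \notin XB].
Proof.
move=> /andP [gP /andP [pP /andP [h1 /andP [h2 /andP [cP /andP [g1 /andP [g2 /andP [x1 x2]]]]]]]].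
by case: (gpath_elim Hsym gP) => uP HP.
Qed.


Lemma sideB' x y : adj x y -> y \in B -> x \in A.
Proof. by rewrite Hsym => H /(sideB H). Qed.

Lemma head_rev (d : T) s : head d (rev s) = last d s.
Proof. by rewrite -{2}[s]revK last_rev. Qed.

Lemma Qi_smooth v0 s v :
  let P := v0 :: s in
  PS P -> v \in P -> adj v0 v ->
  (forall j : 'I_m, j < k -> b j != v) ->
  ~~ inc v0 (nth v0 P 1) v ->
  ~~ bad_nb adj inc P v0 v ->
  nth v0 P (index v P).-1 \notin XA ->
  good8 P (nth v0 P (index v P).-1) ->
  ~~ inc v0 (last v0 s) v ->
  PS (rev (take (index v P) P) ++ drop (index v P) P).
Proof.
move=> P HP vP av0v Ha Hb Hc Hd He Hf.
have [[uP adjP pP v0A vlB] [cP g0 gl x0 xl]] := ps_elim HP.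
set i := index v P.
have vi : nth v0 P i = v by rewrite nth_index.
have i_gt0 : 0 < i.
  case: (posnP i) => // i0; move: av0v; rewrite -vi i0 /=; by rewrite Hirr.
have i_lt : i < size P by rewrite index_mem.
set u := nth v0 P i.-1.
set s1 := take i P; set s2 := drop i P.
have HPc : P = s1 ++ s2 by rewrite cat_take_drop.
have s1n : s1 != [::] by rewrite -size_eq0 size_takel ?(ltnW i_lt) // -lt0n.
have s2n : s2 != [::] by rewrite -size_eq0 size_drop subn_eq0 -ltnNge.
have rs1n : rev s1 != [::] by rewrite -size_eq0 size_rev size_eq0.
have l1 : last v0 s1 = u.
  rewrite -nth_last size_takel ?(ltnW i_lt) // nth_take //; by rewrite prednK.
have h2 : head v0 s2 = v.
  move: s2n; rewrite /s2; have := nth_drop i v0 P 0; rewrite addn0 vi.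
  by case: (drop i P).
have h1 : head v0 s1 = v0 by rewrite /s1 /P; case: (i) i_gt0.
set Q := rev s1 ++ s2.
have hQ : head v0 Q = u by rewrite /Q; move: rs1n; rewrite -l1 -head_rev; case: (rev s1).
have lQ : last v0 Q = last v0 s.
  have -> : last v0 s = last v0 P by [].
  by rewrite /Q HPc !last_cat; case: (s2) s2n.
have phQ c y : phe Q c y = [|| phe s1 c y, e2 c y v0 v | phe s2 c y].
  by rewrite /Q (phe_cat v0) // phe_rev last_rev h1 h2.
have phP c y : phe P c y = [|| phe s1 c y, e2 c y u v | phe s2 c y].
  by rewrite HPc (phe_cat v0) // l1 h2.
have K3 c y : phe Q c y -> phe P c y \/ (c = v0 /\ y = v) \/ (c = v /\ y = v0).
  rewrite phQ phP; case/or3P => [->|/e2P H|->]; rewrite ?orbT; by auto.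
have HQ2 c y : phe P c y -> ~~ e2 c y u v -> phe Q c y.
  by rewrite phQ phP; case/or3P => [->|->|->]; rewrite ?orbT.
have permQ : perm_eq Q P by rewrite HPc /Q perm_cat2r perm_rev.
have memQ : Q =i P := perm_mem permQ.
have uQ : uniq Q by rewrite (perm_uniq permQ).
have vB : v \in B := sideA av0v v0A.
have Puv : phe P u v by rewrite phP e2_refl orbT.
have Pvu : phe P v u by rewrite phP e2_rev orbT.
have uA : u \in A := sideB' (adjP _ _ Puv) vB.
have v0v : v0 != v by apply/eqP => E; move: av0v; rewrite E Hirr.
have K1 d : phe Q v0 d -> d = nth v0 P 1 \/ d = v.
  case/K3 => [/(phe_head uP) -> | [[_ ->] | [E _]]]; auto.
  by move: v0v; rewrite E eqxx.
have K2 d : phe Q v d -> phe P v d \/ d = v0.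
  case/K3 => [-> | [[E _] | [_ ->]]]; auto.
  by move: v0v; rewrite E eqxx.
have notbad y : phe P v y -> inc v y v0 -> False.
  move=> Py /incS h; move/negP: Hc; apply; exact: (bad_intro uP vP av0v Py h).
apply: (@ps_intro Q v0) => //.
- by move: s2n; rewrite /Q; case: (s2) => // y t _; case: (rev s1).
- move=> x y /K3 [/adjP // | [[-> ->] | [-> ->]]] //; by rewrite Hsym.
- move: pP => /andP [/forallP Hff Hset]; apply/andP; split.
    apply/forallP => j; apply/implyP => jk; move/implyP: (Hff j) => /(_ jk) H.
    apply: HQ2 => //; apply/negP => /e2P [[_ E]|[E _]].
      by move/negP: (Ha j jk); rewrite E eqxx.
    by case: (nAB (aA j)); rewrite E.
  have -> : [set x | (x \in Q) && (x \in A)] = [set x | (x \in P) && (x \in A)].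
    by apply/setP => x; rewrite !inE memQ.
  have -> : [set x | (x \in Q) && (x \in B)] = [set x | (x \in P) && (x \in B)].
    by apply/setP => x; rewrite !inE memQ.
  exact: Hset.
- by rewrite hQ.
- by rewrite lQ.
- apply: compat_intro => c y d Hy Hdd; apply/negP => h.
  case: (K3 _ _ Hy) => [Py | [[Ec Ey] | [Ec Ey]]].
  + case: (K3 _ _ Hdd) => [Pd | [[Ec Ed] | [Ec Ed]]].
    * by move/negP: (compat_elim cP Py Pd).
    * subst c d; move: Py => /(phe_head uP) Ey; subst y.
      by move/negP: Hb.
    * by subst c d; apply: (notbad _ Py h).
  + subst c y; case: (K1 _ Hdd) => Ed; subst d; last by rewrite inc_neq in h.
    by move/negP: Hb; apply; apply: incS.
  + subst c y; case: (K2 _ Hdd) => [Pd | Ed]; last by subst d; rewrite inc_neq in h.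
    by apply: (notbad _ Pd); apply: incS.
- rewrite hQ; apply: (good_mono (P := P)) => //; last by rewrite HPc /Q !size_cat size_rev.
  move=> c /(bad_elim uQ) [cQ auc [y Hy h]].
  rewrite memQ in cQ.
  case: (K3 _ _ Hy) => [Py | [[Ec Ey] | [Ec Ey]]].
  + exact: (bad_intro uP cQ auc Py h).
  + by subst c; case: (nAB v0A (sideA auc uA)).
  + by subst c y; case: (notbad _ Pvu h).
- rewrite lQ; apply: (good_mono (P := P)) => //; last by rewrite HPc /Q !size_cat size_rev.
  move=> c /(bad_elim uQ) [cQ auc [y Hy h]].
  rewrite memQ in cQ.
  case: (K3 _ _ Hy) => [Py | [[Ec Ey] | [Ec Ey]]].
  + exact: (bad_intro uP cQ auc Py h).
  + by subst c y; move/negP: Hf.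
  + by subst c; case: (nAB (sideB auc vlB) vB).
- by rewrite hQ.
- by rewrite lQ.
Qed.


Lemma phe2 (y x c z : T) : phe [:: y; x] c z = e2 c z y x.
Proof.
rewrite /path_has_edge /= !in_cons !in_nil !orbF !xpair_eqE /e2.
by rewrite [(z == y) && _]andbC.
Qed.

Lemma Qx_smooth v0 s j :
  let P := v0 :: s in
  PS P -> b j \notin P -> adj v0 (b j) ->
  ~~ inc v0 (nth v0 P 1) (b j) ->
  ~~ inc (b j) (a j) v0 ->
  good8 P (a j) ->
  a j \notin XA ->
  ~~ inc v0 (last v0 s) (b j) ->
  ~~ inc (a j) (b j) (last v0 s) ->
  PS [:: f (b j), b j & P].
Proof.
move=> P HP xP av0x Hg Hh Hi Hj Hk Hl.
rewrite fm_b.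
have [[uP adjP pP v0A vlB] [cP g0 gl x0 xl]] := ps_elim HP.
move: xP av0x Hg Hh Hi Hj Hk Hl; set x := b j; set y := a j; move=> xP av0x Hg Hh Hi Hj Hk Hl.
have xB : x \in B := bB j.
have yA : y \in A := aA j.
have xnA : x \in A = false by apply/negP => /nAB /(_ xB).
move: pP => /andP [/forallP Hff /eqP Hset].
have yP : y \notin P.
  apply/negP => yP; move/negP: xP; apply.
  have : f y \in f @: [set z | (z \in P) && (z \in A)] by apply: imset_f; rewrite inE yP yA.
  by rewrite Hset inE fm_a => /andP [].
have yx : y != x by apply/eqP => E; apply: (nAB yA); rewrite E.
set Q := [:: y, x & P].
have phQ c z : phe Q c z = [|| e2 c z y x, e2 c z x v0 | phe P c z].
  have -> : Q = y :: [:: x] ++ v0 :: s by [].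
  by rewrite phe_cat1 phe2.
have K3 c z : phe Q c z -> phe P c z \/ [\/ (c = y /\ z = x), (c = x /\ z = y),
   (c = x /\ z = v0) | (c = v0 /\ z = x)].
  rewrite phQ; case/or3P => [/e2P [] | /e2P [] | ]; auto.
  - by move=> H; right; apply: Or41.
  - by move=> H; right; apply: Or42.
  - by move=> H; right; apply: Or43.
  - by move=> H; right; apply: Or44.
have v0x : v0 != x by apply: contraNneq xP => <-; rewrite /P mem_head.
have yP' c z : phe P c z -> c != y.
  by move=> /phe_mem /andP [cP' _]; apply/eqP => E; move/negP: yP; apply; rewrite -E.
have xP' c z : phe P c z -> c != x.
  by move=> /phe_mem /andP [cP' _]; apply/eqP => E; move/negP: xP; apply; rewrite -E.
have Kx d : phe Q x d -> d = y \/ d = v0.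
  case/K3 => [/xP' | [[E _] | [_ ->] | [_ ->] | [E _]]].
  - by rewrite eqxx.
  - by move: yx; rewrite E eqxx.
  - by left.
  - by right.
  - by move: v0x; rewrite E eqxx.
have Ky d : phe Q y d -> d = x.
  case/K3 => [/yP' | [[_ ->] | [E _] | [E _] | [E _]]].
  - by rewrite eqxx.
  - by [].
  - by move: yx; rewrite E eqxx.
  - by move: yx; rewrite E eqxx.
  - by case/negP: yP; rewrite E /P mem_head.
have Kv d : phe Q v0 d -> d = nth v0 P 1 \/ d = x.
  case/K3 => [/(phe_head uP) -> | [[E _] | [E _] | [E _] | [_ ->]]].
  - by left.
  - by case/negP: yP; rewrite -E /P mem_head.
  - by move: v0x; rewrite E eqxx.
  - by move: v0x; rewrite E eqxx.
  - by right.
have uQ : uniq Q.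
  rewrite /Q /= in_cons negb_or yx yP xP.
  by move: uP; rewrite /P /= => ->.
apply: (@ps_intro Q y) => //.
- move=> c z /K3 [/adjP // | [[-> ->] | [-> ->] | [-> ->] | [-> ->]]].
  + exact: adjab.
  + by rewrite Hsym adjab.
  + by rewrite Hsym.
  + by [].
- apply/andP; split.
    apply/forallP => i; apply/implyP => ik; move/implyP: (Hff i) => /(_ ik) H.
    by rewrite phQ H !orbT.
  have -> : [set z | (z \in Q) && (z \in A)] = y |: [set z | (z \in P) && (z \in A)].
    apply/setP => z; rewrite /Q !inE.
    case: (eqVneq z y) => [->|_] //=; try by rewrite ?yA.
    by case: (eqVneq z x) => [->|_] //=; rewrite xnA ?andbF.
  have -> : [set z | (z \in Q) && (z \in B)] = x |: [set z | (z \in P) && (z \in B)].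
    apply/setP => z; rewrite /Q !inE.
    case: (eqVneq z y) => [->|_] //=.
      have yB : y \in B = false by apply/negP => /(nAB yA).
      by rewrite yB andbF orbF (negbTE yx).
    by case: (eqVneq z x) => [->|_] //=; rewrite ?xB ?andbT.
  by rewrite imsetU1 Hset fm_a.
- apply: compat_intro => c z d Hz Hdd; apply/negP => h.
  case: (K3 _ _ Hz) => [Pz | [[Ec Ez] | [Ec Ez] | [Ec Ez] | [Ec Ez]]]; try subst c.
  + case: (K3 _ _ Hdd) => [Pd | [[Ec Ed] | [Ec Ed] | [Ec Ed] | [Ec Ed]]].
    * by move/negP: (compat_elim cP Pz Pd).
    * by move/negP: (yP' _ _ Pz); apply; rewrite Ec.
    * by move/negP: (xP' _ _ Pz); apply; rewrite Ec.
    * by move/negP: (xP' _ _ Pz); apply; rewrite Ec.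
    * subst c d; move: Pz => /(phe_head uP) Ez; subst z.
      by move/negP: Hg.
  + subst z; have := Ky _ Hdd => Ed; subst d; by rewrite inc_neq in h.
  + subst z; case: (Kx _ Hdd) => Ed; subst d; first by rewrite inc_neq in h.
    by move/negP: Hh.
  + subst z; case: (Kx _ Hdd) => Ed; subst d; last by rewrite inc_neq in h.
    by move/negP: Hh; apply; apply: incS.
  + subst z; case: (Kv _ Hdd) => Ed; subst d; last by rewrite inc_neq in h.
    by move/negP: Hg; apply; apply: incS.
- apply: (good_mono (P := P)) => //; last by rewrite /Q /= ltnW.
  move=> c /(bad_elim uQ) [cQ ayc [z Hz h]].
  case: (K3 _ _ Hz) => [Pz | [[Ec Ez] | [Ec Ez] | [Ec Ez] | [Ec Ez]]]; try subst c z.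
  + by move: (phe_mem Pz) => /andP [cP' _]; exact: (bad_intro uP cP' ayc Pz h).
  + by rewrite Hirr in ayc.
  + by rewrite inc_neq in h.
  + by move/negP: Hh.
  + by case: (nAB v0A (sideA ayc yA)).
- apply: (good_mono (P := P)) => //; last by rewrite /Q /= ltnW.
  move=> c /(bad_elim uQ) [cQ ayc [z Hz h]].
  case: (K3 _ _ Hz) => [Pz | [[Ec Ez] | [Ec Ez] | [Ec Ez] | [Ec Ez]]]; try subst c z.
  + by move: (phe_mem Pz) => /andP [cP' _]; exact: (bad_intro uP cP' ayc Pz h).
  + by case/negP: Hl; apply: incS.
  + by case: (nAB (sideB ayc vlB) xB).
  + by case: (nAB (sideB ayc vlB) xB).
  + by move/negP: Hk.
Qed.


Lemma cardU_le (U : finType) (X Y : {set U}) : #|X :|: Y| <= #|X| + #|Y|.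
Proof. by rewrite cardsU leq_subr. Qed.

Lemma card_pre (U : finType) (g : 'I_m -> U) (p : pred 'I_m) (Y : {set U}) :
  injective g -> (forall j, p j -> g j \in Y) -> #|[set j | p j]| <= #|Y|.
Proof.
move=> ig H; rewrite -(card_imset _ ig); apply: subset_leq_card.
by apply/subsetP => y /imsetP [j]; rewrite inE => pj ->; exact: H.
Qed.

Lemma card_ltk : #|[set j : 'I_m | j < k]| <= k.
Proof.
rewrite cardE -(size_map val).
apply: (@leq_trans (size (iota 0 k))); last by rewrite size_iota.
apply: uniq_leq_size; first by rewrite (map_inj_uniq val_inj) enum_uniq.
by move=> x /mapP [j]; rewrite mem_enum inE => jk ->; rewrite mem_iota add0n leq0n.
Qed.

Lemma dcount (T1 T2 : finType) (r : T1 -> T2 -> bool) :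
  \sum_(x : T1) #|[set y | r x y]| = \sum_(y : T2) #|[set x | r x y]|.
Proof.
have E (U V : finType) (q : U -> V -> bool) u : #|[set w | q u w]| = \sum_(w : V) (q u w : nat).
  rewrite -sum1_card big_mkcond /=; apply: eq_bigr => w _; rewrite inE; by case: (q u w).
under eq_bigr => x _ do rewrite (E _ _ r).
under [RHS]eq_bigr => y _ do rewrite (E _ _ (fun y x => r x y)).
exact: exchange_big.
Qed.

Local Open Scope ring_scope.

Hypothesis Hbnd : bounded_inc adj inc (mu * m%:R).
Hypothesis cA : #|A| = m.
Hypothesis cB : #|B| = m.
Hypothesis cover : A :|: B = [set: T].

Lemma inc_card v x : (#|[set y | inc v x y]|%:R <= mu * m%:R :> R)%R.
Proof.
case E: (adj v x); first exact: Hbnd.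
have -> : [set y | inc v x y] = set0.
  apply/setP => y; rewrite !inE; apply/negP => /Hinc /and4P [h _ _ _]; by rewrite E in h.
by rewrite cards0 mulr_ge0 // ltW.
Qed.

Lemma inc_card2 v p : (#|[set x | inc v x p]|%:R <= mu * m%:R :> R)%R.
Proof.
apply: le_trans (inc_card v p); rewrite ler_nat; apply: subset_leq_card.
by apply/subsetP => x; rewrite !inE => /incS.
Qed.

Lemma cardT_le : (#|T| <= 2 * m)%N.
Proof. by rewrite -cardsT -cover mul2n -addnn -{1}cA -cB cardU_le. Qed.

Lemma sum_in_le (F : T -> R) (X : {set T}) : (forall x, 0 <= F x)%R ->
  (\sum_(x in X) F x <= \sum_x F x)%R.
Proof.
move=> F0; rewrite big_mkcond /=; apply: ler_sum => x _.
by case: (x \in X) => //.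
Qed.

Lemma XA_bound : (0 < m)%N -> (#|XA|%:R <= Num.sqrt mu * m%:R :> R)%R.
Proof.
move=> m0.
set sm := Num.sqrt mu * m%:R.
have sm0 : (0 < sm)%R by rewrite mulr_gt0 ?sqrtr_gt0 // ltr0n.
have key : (#|XA|%:R * sm <= mu * m%:R * m%:R)%R.
  set F := fun x => (#|[set i | inc (b i) (a i) x]|%:R : R).
  apply: (@le_trans _ _ (\sum_(x in XA) F x)).
    rewrite mulrC mulr_natr -sumr_const; apply: ler_sum => x.
    by rewrite /X_A inE => /andP [_].
  apply: le_trans (sum_in_le _ _) _ => //.
  rewrite /F -natr_sum.
  rewrite (_ : (\sum_x _ = \sum_(i : 'I_m) #|[set x | inc (b i) (a i) x]|)%N); last first.
    exact: (dcount (fun x i => inc (b i) (a i) x)).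
  rewrite natr_sum.
  apply: (@le_trans _ _ (\sum_(i : 'I_m) (mu * m%:R))).
    by apply: ler_sum => i _; exact: inc_card.
  by rewrite sumr_const card_ord (mulr_natr (mu * m%:R)).
rewrite -(ler_pM2r sm0); apply: le_trans key _.
rewrite /sm mulrACA -expr2 sqr_sqrtr; last exact: ltW mu_gt0.
by rewrite mulrA.
Qed.


Variable v0 : T.
Variable s : seq T.
Local Notation P := (v0 :: s).
Hypothesis HP : PS P.

Lemma card6 (U : finType) (X1 X2 X3 X4 X5 X6 : {set U}) :
  (#|X1 :|: X2 :|: X3 :|: X4 :|: X5 :|: X6| <= #|X1| + #|X2| + #|X3| + #|X4| + #|X5| + #|X6|)%N.
Proof.
by do 4 (apply: leq_trans (cardU_le _ _) _; rewrite leq_add2r); apply: cardU_le.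
Qed.

Lemma NG_bound : 4 * #|[set x | ~~ good8 P x]|%:R <= Num.sqrt mu * m%:R.
Proof.
have [[uP adjP pP v0A vlB] _] := ps_elim HP.
set NG := [set x | ~~ good8 P x].
set n := size P.
have n0 : (0 < n)%N by [].
set F := fun x => (#|[set v | bad_nb adj inc P x v]|%:R : R).
have L1 : #|NG|%:R * (8 * Num.sqrt mu * n%:R) <= \sum_x F x.
  apply: (@le_trans _ _ (\sum_(x in NG) F x)); last exact: sum_in_le.
  rewrite mulrC (mulr_natr _ #|NG|) -sumr_const; apply: ler_sum => x.
  by rewrite inE /good -leNgt.
have L2 : \sum_x F x <= n%:R * (2 * (mu * m%:R)).
  rewrite /F -natr_sum.
  rewrite (_ : (\sum_x _ = \sum_(v : T) #|[set x | bad_nb adj inc P x v]|)%N); last first.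
    exact: (dcount (fun x v => bad_nb adj inc P x v)).
  rewrite natr_sum.
  apply: (@le_trans _ _ (\sum_(v : T) (if v \in P then 2 * (mu * m%:R) else 0))).
    apply: ler_sum => v _; case: ifP => vP; last first.
      rewrite (_ : [set x | bad_nb adj inc P x v] = set0) ?cards0 //.
      by apply/setP => x; rewrite !inE /bad_nb vP.
    set p := nth v P (index v P).-1; set q := nth v P (index v P).+1.
    apply: (@le_trans _ _ (#|[set x | inc v x p] :|: [set x | inc v x q]|%:R)).
      rewrite ler_nat; apply: subset_leq_card; apply/subsetP => x.
      rewrite !inE /bad_nb => /and3P [_ _ /orP [/andP [_ ->] | /andP [_ ->]]] //.
      by rewrite orbT.
    apply: (@le_trans _ _ (#|[set x | inc v x p]|%:R + #|[set x | inc v x q]|%:R)).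
      by rewrite -natrD ler_nat cardU_le.
    by rewrite mulr2n mulrDl mul1r lerD // inc_card2.
  rewrite -big_mkcond /= sumr_const.
  by rewrite (card_uniqP uP) -/n (mulr_natl _ n).
have H := le_trans L1 L2.
set t := Num.sqrt mu.
have mut : mu = t * t by rewrite /t -expr2 sqr_sqrtr // ltW.
have t0 : 0 < t by rewrite sqrtr_gt0.
have nR : 0 < n%:R :> R by rewrite ltr0n.
have k0 : 0 < 2 * t * n%:R by rewrite mulr_gt0 // mulr_gt0.
rewrite -(ler_pM2r k0).
have -> : 4 * #|NG|%:R * (2 * t * n%:R) = #|NG|%:R * (8 * t * n%:R) by ring.
have -> : t * m%:R * (2 * t * n%:R) = n%:R * (2 * (t * t * m%:R)) by ring.
by rewrite -mut.
Qed.


Lemma idx_pos v : v \in P -> v != v0 -> (0 < index v P)%N.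
Proof. by move=> _ /negbTE; rewrite /= eq_sym => ->. Qed.

Lemma u_inj v w : v \in P -> w \in P -> v != v0 -> w != v0 ->
  nth v0 P (index v P).-1 = nth v0 P (index w P).-1 -> v = w.
Proof.
have [[uP _ _ _ _] _] := ps_elim HP.
move=> vP wP vv0 wv0 E.
have iv := idx_pos vP vv0; have iw := idx_pos wP wv0.
have lv : (index v P < size P)%N by rewrite index_mem.
have lw : (index w P < size P)%N by rewrite index_mem.
have : index (nth v0 P (index v P).-1) P = index (nth v0 P (index w P).-1) P by rewrite E.
have h1 : ((index v P).-1 < size P)%N by apply: leq_ltn_trans (leq_pred _) lv.
have h2 : ((index w P).-1 < size P)%N by apply: leq_ltn_trans (leq_pred _) lw.
rewrite !index_uniq //.
move=> Ei; have Ei' : index v P = index w P by rewrite -(prednK iv) -(prednK iw) Ei.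
by rewrite -(nth_index v0 vP) -(nth_index v0 wP) Ei'.
Qed.

Variable gamma : R.
Hypothesis Hk : k%:R = gamma * m%:R.
Hypothesis Hg0 : 0 <= gamma.
Hypothesis Hs1 : Num.sqrt mu <= 1.
Hypothesis Hmax : ~ (exists x, (x \notin P) && PS [:: f x, x & P]).

Lemma main_count : exists Z : {set T},
  [/\ Z \subset nbhd adj v0 :&: [set v | v \in P],
     (deg adj v0)%:R - (25 * Num.sqrt mu + 2 * gamma) * m%:R <= #|Z|%:R &
     forall v, v \in Z -> PS (rev (take (index v P) P) ++ drop (index v P) P)].
Proof.
have [[uP adjP pP v0A vlB] [cP g0 gl x0 xl]] := ps_elim HP.
pose v1 := nth v0 P 1.
pose vl := last v0 s.
pose u v := nth v0 P (index v P).-1.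
pose NG := [set x | ~~ good8 P x].
pose Z := [set v | [&& adj v0 v, v \in P, [forall j : 'I_m, (j < k)%N ==> (b j != v)],
   ~~ inc v0 v1 v, ~~ bad_nb adj inc P v0 v, u v \notin XA, good8 P (u v) & ~~ inc v0 vl v]].
exists Z; split.
- apply/subsetP => v; rewrite !inE => /andP [av /andP [vP _]]; by rewrite av vP.
- set S := nbhd adj v0 :&: [set v | v \in P].
  set Nd := nbhd adj v0 :\: [set v | v \in P].
  have dS : (deg adj v0 <= #|S| + #|Nd|)%N.
    by rewrite /deg -(setID (nbhd adj v0) [set v | v \in P]) cardU_le.
  have SZ : (#|S| <= #|Z| + #|S :\: Z|)%N.
    rewrite -(cardsID Z S) leq_add2r; apply: subset_leq_card; exact: subsetIr.
  pose Ea := b @: [set j : 'I_m | (j < k)%N].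
  pose Eb := [set v | inc v0 v1 v].
  pose Ec := [set v | bad_nb adj inc P v0 v].
  pose Ed := [set v in S | u v \in XA].
  pose Ee := [set v in S | u v \in NG].
  pose Ef := [set v | inc v0 vl v].
  have Esub : S :\: Z \subset Ea :|: Eb :|: Ec :|: Ed :|: Ee :|: Ef.
    apply/subsetP => v; rewrite in_setD => /andP [vnZ vS].
    move: (vS); rewrite in_setI => /andP [avN vPs].
    have av : adj v0 v by move: avN; rewrite /nbhd in_set.
    have vP : v \in P by move: vPs; rewrite in_set.
    rewrite !in_setU.
    case: (boolP (v \in Ea)) => // nEa.
    case: (boolP (v \in Eb)) => [_|nb]; first by rewrite ?orbT.
    case: (boolP (v \in Ec)) => [_|nc]; first by rewrite ?orbT.
    case: (boolP (v \in Ed)) => [_|nd]; first by rewrite ?orbT.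
    case: (boolP (v \in Ee)) => [_|ne]; first by rewrite ?orbT.
    case: (boolP (v \in Ef)) => [_|nf]; first by rewrite ?orbT.
    exfalso; move/negP: vnZ; apply.
    rewrite /Eb in_set in nb; rewrite /Ec in_set in nc; rewrite /Ef in_set in nf.
    rewrite /Ed in_set vS /= in nd; rewrite /Ee in_set vS /= /NG in_set negbK in ne.
    rewrite /Z in_set av vP nb nc nd ne nf !andbT /=.
    apply/forallP => j; apply/implyP => jk; apply/eqP => E.
    by move/negP: nEa; apply; apply/imsetP; exists j; rewrite ?inE.
  have Ebnd : (#|S :\: Z| <= #|Ea| + #|Eb| + #|Ec| + #|Ed| + #|Ee| + #|Ef|)%N.
    exact: leq_trans (subset_leq_card Esub) (card6 _ _ _ _ _ _).
  pose J1 := [set j : 'I_m | inc v0 v1 (b j)].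
  pose J2 := [set j : 'I_m | inc (b j) (a j) v0].
  pose J3 := [set j : 'I_m | a j \in NG].
  pose J4 := [set j : 'I_m | a j \in XA].
  pose J5 := [set j : 'I_m | inc v0 vl (b j)].
  pose J6 := [set j : 'I_m | inc (a j) (b j) vl].
  have Nsub : Nd \subset b @: (J1 :|: J2 :|: J3 :|: J4 :|: J5 :|: J6).
    apply/subsetP => x; rewrite in_setD => /andP [xnP av].
    have xnP' : x \notin P by move: xnP; rewrite in_set.
    have av' : adj v0 x by move: av; rewrite /nbhd in_set.
    have [j Ej] := B_b cB (sideA av' v0A).
    apply/imsetP; exists j => //; subst x.
    rewrite !in_setU.
    case: (boolP (j \in J1)) => [_|n1]; first by rewrite ?orbT.
    case: (boolP (j \in J2)) => [_|n2]; first by rewrite ?orbT.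
    case: (boolP (j \in J3)) => [_|n3]; first by rewrite ?orbT.
    case: (boolP (j \in J4)) => [_|n4]; first by rewrite ?orbT.
    case: (boolP (j \in J5)) => [_|n5]; first by rewrite ?orbT.
    case: (boolP (j \in J6)) => [_|n6]; first by rewrite ?orbT.
    exfalso; apply: Hmax; exists (b j); rewrite xnP' /=.
    rewrite /J1 in_set in n1; rewrite /J2 in_set in n2; rewrite /J3 in_set /NG in_set negbK in n3.
    rewrite /J4 in_set in n4; rewrite /J5 in_set in n5; rewrite /J6 in_set in n6.
    exact: Qx_smooth.
  have Nbnd : (#|Nd| <= #|J1| + #|J2| + #|J3| + #|J4| + #|J5| + #|J6|)%N.
    apply: leq_trans (subset_leq_card Nsub) _.
    exact: leq_trans (leq_imset_card _ _) (card6 _ _ _ _ _ _).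
  have Hnat : (deg adj v0 <= #|Z| + (#|Ea| + #|Eb| + #|Ec| + #|Ed| + #|Ee| + #|Ef|)
      + (#|J1| + #|J2| + #|J3| + #|J4| + #|J5| + #|J6|))%N.
    apply: leq_trans dS _; apply: leq_add; last exact: Nbnd.
    by apply: leq_trans SZ _; rewrite leq_add2l.
  have := Hnat; rewrite -(ler_nat R) !natrD => HR.
  have m0 : (0 < m)%N by rewrite -cA; apply/card_gt0P; exists v0.
  have hXA := XA_bound m0.
  have hNG : 4 * #|NG|%:R <= Num.sqrt mu * m%:R := NG_bound.
  have ea : #|Ea|%:R <= gamma * m%:R :> R.
    by rewrite -Hk ler_nat; apply: leq_trans (leq_imset_card _ _) card_ltk.
  have eb : #|Eb|%:R <= mu * m%:R :> R by exact: inc_card.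
  have nP : (size P)%:R <= 2 * m%:R :> R.
    rewrite -natrM ler_nat -(card_uniqP uP); apply: leq_trans (max_card _) cardT_le.
  have ec : #|Ec|%:R <= 16 * (Num.sqrt mu * m%:R) :> R.
    apply: ltW; apply: lt_le_trans g0 _.
    rewrite -mulrA (_ : 16 * (Num.sqrt mu * m%:R) = 8 * (Num.sqrt mu * (2 * m%:R))); last by ring.
    by rewrite ler_wpM2l // ler_wpM2l ?sqrtr_ge0.
  have ed : #|Ed|%:R <= #|XA|%:R :> R.
    rewrite ler_nat -(@card_in_imset _ _ u).
      by apply: subset_leq_card; apply/subsetP => y /imsetP [v]; rewrite in_set => /andP [_ h] ->.
    move=> v w; rewrite !in_set => /andP [vS _] /andP [wS _].
    move: vS wS => /andP [av vP] /andP [aw wP].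
    apply: u_inj => //; apply/eqP => E; [move: av | move: aw]; by rewrite -E Hirr.
  have ee : #|Ee|%:R <= #|NG|%:R :> R.
    rewrite ler_nat -(@card_in_imset _ _ u).
      by apply: subset_leq_card; apply/subsetP => y /imsetP [v]; rewrite in_set => /andP [_ h] ->.
    move=> v w; rewrite !in_set => /andP [vS _] /andP [wS _].
    move: vS wS => /andP [av vP] /andP [aw wP].
    apply: u_inj => //; apply/eqP => E; [move: av | move: aw]; by rewrite -E Hirr.
  have ef : #|Ef|%:R <= mu * m%:R :> R by exact: inc_card.
  have j1 : #|J1|%:R <= mu * m%:R :> R.
    apply: le_trans (inc_card v0 v1); rewrite ler_nat; apply: card_pre injb _ => j.
    by rewrite inE.
  have j2 : #|J2|%:R <= Num.sqrt mu * m%:R :> R.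
    by move: x0; rewrite /X_A in_set v0A /= -ltNge => /ltW.
  have j3 : #|J3|%:R <= #|NG|%:R :> R by rewrite ler_nat; apply: card_pre inja _ => j.
  have j4 : #|J4|%:R <= #|XA|%:R :> R by rewrite ler_nat; apply: card_pre inja _ => j.
  have j5 : #|J5|%:R <= mu * m%:R :> R.
    apply: le_trans (inc_card v0 vl); rewrite ler_nat; apply: card_pre injb _ => j.
    by rewrite inE.
  have j6 : #|J6|%:R <= Num.sqrt mu * m%:R :> R.
    by move: xl; rewrite /X_B in_set vlB /= -ltNge => /ltW.
  have mmu : mu * m%:R <= Num.sqrt mu * m%:R.
    have mut : mu = Num.sqrt mu * Num.sqrt mu by rewrite -expr2 sqr_sqrtr // ltW.
    rewrite {1}mut -mulrA ler_piMl //; by rewrite mulr_ge0 ?sqrtr_ge0.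
  have gm0 : 0 <= gamma * m%:R by rewrite mulr_ge0.
  have sm0 : 0 <= Num.sqrt mu * m%:R by rewrite mulr_ge0 ?sqrtr_ge0.
  rewrite mulrDl -!mulrA.
  move: HR ea eb ec ed ee ef j1 j2 j3 j4 j5 j6 mmu gm0 hXA hNG sm0.
  move: (Num.sqrt mu * m%:R) (mu * m%:R) (gamma * m%:R) => sm mm gm.
  move=> *; lra.
- move=> v; rewrite inE => /andP [av /andP [vP /andP [Ha /andP [Hb /andP [Hc /andP [Hd /andP [He Hf]]]]]]].
  apply: Qi_smooth => //.
  by move=> j jk; move/forallP: Ha => /(_ j) /implyP; apply.
Qed.

End Main.

Local Open Scope ring_scope.

Theorem lemma4p4 (R : realType) (mu beta gamma : R)
  (T : finType) (adj : rel T) (inc : T -> T -> T -> bool)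
  (A B : {set T}) (m k : nat) (a b : 'I_m -> T) (v0 : T) (s : seq T) :
  let P := v0 :: s in
  0 < mu -> 0 < beta -> 0 < gamma ->
  gamma + beta + Num.sqrt mu < 1 / 2000 ->
  (* gamma m is treated as an integer k *)
  k%:R = gamma * m%:R ->
  (* G bipartite simple graph with bipartition A cup B, |A| = |B| = m *)
  simple_graph adj ->
  A :|: B = [set: T] -> [disjoint A & B] ->
  (forall x y, adj x y -> ((x \in A) && (y \in B)) || ((x \in B) && (y \in A))) ->
  #|A| = m -> #|B| = m ->
  (forall v : T, (m%:R / 10 <= (deg adj v)%:R :> R)) ->
  (1 - beta) * (m ^ 2)%:R <= #|[set p : T * T | (p.1 \in A) && adj p.1 p.2]|%:R ->
  (* F is a (mu m)-bounded incompatibility system *)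
  incompat_system adj inc -> bounded_inc adj inc (mu * m%:R) ->
  (* perfect matching e_i = {a_i, b_i} *)
  injective a -> injective b ->
  (forall i, a i \in A) -> (forall i, b i \in B) -> (forall i, adj (a i) (b i)) ->
  proper_smooth adj inc A B a b mu k P ->
  ~ (exists x, (x \notin P) &&
       proper_smooth adj inc A B a b mu k [:: fmatch a b x, x & P]) ->
  exists Z : {set T},
    [/\ Z \subset nbhd adj (v0) :&: [set v | v \in P],
       (deg adj (v0))%:R - (25 * Num.sqrt mu + 2 * gamma) * m%:R <= #|Z|%:R &
       forall v, v \in Z ->
         proper_smooth adj inc A B a b mu k
           (rev (take (index v P) P) ++ drop (index v P) P)].
Proof.
move=> P mu0 beta0 gamma0 Hsum Hk [Hsym Hirr] cover Hdis Hbip cA cB _ _ Hinc Hbnd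
  inja injb aA bB adjab HP Hmax.
have Hs1 : Num.sqrt mu <= 1 by lra.
have Hg0 : 0 <= gamma by apply: ltW.
by apply: main_count.
Qed.
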